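(* Let $a,b,c$ be positive integers with $c\geq b\geq a$, and suppose that at least one of the following holds: (1) $c=ka+lb$ for some integers $k,l\geq 0$; (2) $a$ divides $b$; (3) $a\leq 2$. Then there exists a tame polynomial automorphism $F$ of $\mathbb{C}^3$ with $\operatorname{mdeg} F=(a,b,c)$.
   Context: For a polynomial automorphism $F=(F_1,\ldots,F_n)$ of $\mathbb{C}^n$, its multidegree is $\operatorname{mdeg}F:=(\deg F_1,\ldots,\deg F_n)$, where $\deg$ is total degree. A map $F=(F_1,\ldots,F_n)$ is elementary if for some $j\leq n$ and some polynomial $g$ in $n-1$ variables, $F_j=X_j+g(X_1,\ldots,\widehat{X_j},\ldots,X_n)$ and $F_i=X_i$ for $i\neq j$. A polynomial automorphism is tame if it is a composition of invertible affine-linear maps and elementary maps. *)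

(* Defs.v *)
(* Polynomials in 3 variables over algC, encoded as
   {poly {poly {poly algC}}}: innermost variable X1, middle X2, outer X3. *)
From HB Require Import structures.
From mathcomp Require Import all_boot all_order all_algebra all_field.
Set Implicit Arguments. Unset Strict Implicit. Unset Printing Implicit Defensive.
Import Order.TTheory GRing.Theory Num.Theory.
Local Open Scope ring_scope.

Definition K := algC.
Definition P3 := {poly {poly {poly K}}}.

Definition i0 : 'I_3 := @Ordinal 3 0 isT.
Definition i1 : 'I_3 := @Ordinal 3 1 isT.
Definition i2 : 'I_3 := @Ordinal 3 2 isT.

Definition Xv (i : 'I_3) : P3 :=
  if i == i0 then ('X%:P)%:P else if i == i1 then 'X%:P else 'X.

Definition map3 := 'I_3 -> P3.

Definition idmap3 : map3 := Xv.

Definition cst (c : K) : P3 := c%:P%:P%:P.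
Definition ev1 (F : map3) (r : {poly K}) : P3 := (map_poly cst r).[F i0].
Definition ev2 (F : map3) (q : {poly {poly K}}) : P3 := (map_poly (ev1 F) q).[F i1].
Definition subst3 (P : P3) (F : map3) : P3 := (map_poly (ev2 F) P).[F i2].

Definition comp3 (F G : map3) : map3 := fun i => subst3 (F i) G.

(* total degree (degree of the zero polynomial is taken to be 0) *)
Definition tdeg1 (r : {poly K}) : nat := (size r).-1.
Definition tdeg2 (q : {poly {poly K}}) : nat :=
  \max_(j < size q | q`_j != 0) (j + tdeg1 q`_j)%N.
Definition tdeg (P : P3) : nat :=
  \max_(k < size P | P`_k != 0) (k + tdeg2 P`_k)%N.

Definition mdeg (F : map3) : nat * nat * nat :=
  (tdeg (F i0), tdeg (F i1), tdeg (F i2)).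

Definition is_poly_aut (F : map3) : Prop :=
  exists G : map3, comp3 F G = idmap3 /\ comp3 G F = idmap3.

Definition free_of (j : 'I_3) (g : P3) : Prop :=
  subst3 g (fun i => if i == j then 0 else Xv i) = g.

Definition elementary (F : map3) : Prop :=
  exists (j : 'I_3) (g : P3), free_of j g /\
    F j = Xv j + g /\ (forall i, i != j -> F i = Xv i).

Definition affine_inv (F : map3) : Prop :=
  exists (A : 'M[K]_3) (b : 'I_3 -> K), A \in unitmx /\
    forall i, F i = \sum_(j < 3) cst (A i j) * Xv j + cst (b i).

Inductive tame : map3 -> Prop :=
| tame_affine F : affine_inv F -> tame F
| tame_elem F : elementary F -> tame F
| tame_comp F G : tame F -> tame G -> tame (comp3 F G).

(* Main.v *)
Require Import Defs.
From HB Require Import structures.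
From mathcomp Require Import all_boot all_order all_algebra all_field.
Set Implicit Arguments. Unset Strict Implicit. Unset Printing Implicit Defensive.
Import Order.TTheory GRing.Theory Num.Theory.
Local Open Scope ring_scope.

From Stdlib Require Import Lia FunctionalExtensionality.
Ltac natify := repeat match goal with
 | H : is_true (~~ leq _ _) |- _ => rewrite -ltnNge in H
 | H : is_true (leq _ _) |- _ => apply (elimT ssrnat.leP) in H
 | |- is_true (leq _ _) => apply/ssrnat.leP
 end; rewrite ?addnE ?subnE ?mulnE; repeat match goal with H : context [subn] |- _ => rewrite subnE in H | H : context [addn] |- _ => rewrite addnE in H | H : context [muln] |- _ => rewrite mulnE in H end.

Section Lift.
Variable R : comNzRingType.
Variable okR : nat -> R -> Prop.
Hypothesis H0 : forall d, okR d 0.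
Hypothesis Hadd : forall d x y, okR d x -> okR d y -> okR d (x + y).
Hypothesis Hmono : forall d e x, (d <= e)%N -> okR d x -> okR e x.
Hypothesis Hmul : forall d e x y, okR d x -> okR e y -> okR (d + e) (x * y).

Definition okP d (p : {poly R}) := forall j, ((d < j)%N -> p`_j = 0) /\ okR (d - j) p`_j.

Lemma okP0 d : okP d 0.
Proof. by move=> j; rewrite coef0; split. Qed.

Lemma okP_add d p q : okP d p -> okP d q -> okP d (p + q).
Proof.
move=> Hp Hq j; have [Hp1 Hp2] := Hp j; have [Hq1 Hq2] := Hq j.
rewrite coefD; split; first by move=> h; rewrite Hp1 // Hq1 // addr0.
exact: Hadd.
Qed.

Lemma okP_mono d e p : (d <= e)%N -> okP d p -> okP e p.
Proof.
move=> de Hp j; have [Hp1 Hp2] := Hp j; split.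
  move=> h; apply: Hp1; apply: leq_trans h; by rewrite ltnS.
by apply: Hmono Hp2; rewrite leq_sub2r.
Qed.

Lemma okP_mul d e p q : okP d p -> okP e q -> okP (d + e) (p * q).
Proof.
move=> Hp Hq j; rewrite coefM; split.
  move=> h; apply: big1 => [[i /= hi]] _.
  case: (leqP i d) => hid.
    have [Hq1 _] := Hq (j - i)%N; rewrite Hq1 ?mulr0 //; natify; lia.
  by have [Hp1 _] := Hp i; rewrite Hp1 ?mul0r.
apply: (big_ind (okR (d + e - j))) => //; first exact: Hadd.
move=> [i /= hi] _.
case: (leqP i d) => hid; last by have [Hp1 _] := Hp i; rewrite Hp1 ?mul0r //; apply: H0.
case: (leqP (j - i) e) => hje; last by have [Hq1 _] := Hq (j - i)%N; rewrite Hq1 ?mulr0 //; apply: H0.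
have [_ Hp2] := Hp i; have [_ Hq2] := Hq (j - i)%N.
have -> : (d + e - j = (d - i) + (e - (j - i)))%N by natify; lia.
exact: Hmul.
Qed.

Lemma okP_C d c : okR d c -> okP d c%:P.
Proof.
move=> Hc j; rewrite coefC; case: eqP => [->|_]; split => //; by rewrite ?subn0.
Qed.

Lemma okP_X : okR 0 1 -> okP 1 'X.
Proof.
move=> H1 j; rewrite coefX; case: eqP => [->|_]; split => //; by rewrite ?subnn.
Qed.
End Lift.

Definition ok0 (d : nat) (x : K) := True.
Definition ok1 := okP ok0.
Definition ok2 := okP ok1.
Definition ok3 := okP ok2.

Lemma ok0_0 d : ok0 d 0. Proof. by []. Qed.
Lemma ok0_add d x y : ok0 d x -> ok0 d y -> ok0 d (x + y). Proof. by []. Qed.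
Lemma ok0_mono d e x : (d <= e)%N -> ok0 d x -> ok0 e x. Proof. by []. Qed.
Lemma ok0_mul d e x y : ok0 d x -> ok0 e y -> ok0 (d + e) (x * y). Proof. by []. Qed.

Lemma ok1_0 d : ok1 d 0. Proof. exact: okP0. Qed.
Lemma ok1_add d x y : ok1 d x -> ok1 d y -> ok1 d (x + y).
Proof. exact: (@okP_add _ _ ok0_add d x y). Qed.
Lemma ok1_mono d e x : (d <= e)%N -> ok1 d x -> ok1 e x.
Proof. exact: (@okP_mono _ _ ok0_mono d e x). Qed.
Lemma ok1_mul d e x y : ok1 d x -> ok1 e y -> ok1 (d + e) (x * y).
Proof. exact: (@okP_mul _ _ ok0_0 ok0_add ok0_mul d e x y). Qed.

Lemma ok2_0 d : ok2 d 0. Proof. exact: (@okP0 _ _ ok1_0 d). Qed.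
Lemma ok2_add d x y : ok2 d x -> ok2 d y -> ok2 d (x + y).
Proof. exact: (@okP_add _ _ ok1_add d x y). Qed.
Lemma ok2_mono d e x : (d <= e)%N -> ok2 d x -> ok2 e x.
Proof. exact: (@okP_mono _ _ ok1_mono d e x). Qed.
Lemma ok2_mul d e x y : ok2 d x -> ok2 e y -> ok2 (d + e) (x * y).
Proof. exact: (@okP_mul _ _ ok1_0 ok1_add ok1_mul d e x y). Qed.

Lemma ok3_add d x y : ok3 d x -> ok3 d y -> ok3 d (x + y).
Proof. exact: (@okP_add _ _ ok2_add d x y). Qed.
Lemma ok3_mono d e x : (d <= e)%N -> ok3 d x -> ok3 e x.
Proof. exact: (@okP_mono _ _ ok2_mono d e x). Qed.
Lemma ok3_mul d e x y : ok3 d x -> ok3 e y -> ok3 (d + e) (x * y).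
Proof. exact: (@okP_mul _ _ ok2_0 ok2_add ok2_mul d e x y). Qed.

Lemma ok1_1 : ok1 0 1. Proof. exact: okP_C. Qed.
Lemma ok2_1 : ok2 0 1. Proof. exact: (@okP_C _ _ ok1_0 0 1 ok1_1). Qed.
Lemma ok3_1 : ok3 0 1. Proof. exact: (@okP_C _ _ ok2_0 0 1 ok2_1). Qed.

Lemma ok3_exp d x n : ok3 d x -> ok3 (d * n) (x ^+ n).
Proof.
move=> H; elim: n => [|n IH]; first by rewrite muln0 expr0; exact: ok3_1.
by rewrite exprS mulnS; apply: ok3_mul.
Qed.

Lemma ok1_X : ok1 1 'X. Proof. exact: (@okP_X _ _ ok0_0 I). Qed.
Lemma ok2_X : ok2 1 'X. Proof. exact: (@okP_X _ _ ok1_0 ok1_1). Qed.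
Lemma ok3_X3 : ok3 1 'X. Proof. exact: (@okP_X _ _ ok2_0 ok2_1). Qed.

Lemma ok3_X i : ok3 1 (Xv i).
Proof.
rewrite /Xv; case: eqP => _.
  exact: (@okP_C _ _ ok2_0 1 _ (@okP_C _ _ ok1_0 1 _ ok1_X)).
case: eqP => _.
  exact: (@okP_C _ _ ok2_0 1 _ ok2_X).
exact: ok3_X3.
Qed.

Lemma tdeg1_le d r : ok1 d r -> (tdeg1 r <= d)%N.
Proof.
move=> H; rewrite /tdeg1; have : (size r <= d.+1)%N.
  by apply/leq_sizeP => j hj; have [-> //] := H j.
by case: (size r).
Qed.

Lemma tdeg2_le d q : ok2 d q -> (tdeg2 q <= d)%N.
Proof.
move=> H; rewrite /tdeg2; apply/bigmax_leqP => [[j /= hj]] nz.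
have [H1 H2] := H j.
have hjd : (j <= d)%N by rewrite leqNgt; apply/negP => /H1 h; rewrite h eqxx in nz.
by rewrite -leq_subRL //; apply: tdeg1_le.
Qed.

Lemma tdeg_le d P : ok3 d P -> (tdeg P <= d)%N.
Proof.
move=> H; rewrite /tdeg; apply/bigmax_leqP => [[j /= hj]] nz.
have [H1 H2] := H j.
have hjd : (j <= d)%N by rewrite leqNgt; apply/negP => /H1 h; rewrite h eqxx in nz.
by rewrite -leq_subRL //; apply: tdeg2_le.
Qed.

Lemma tdeg1_ge (r : {poly K}) i : r`_i != 0 -> (i <= tdeg1 r)%N.
Proof.
move=> nz; rewrite /tdeg1; have : (i < size r)%N.
  by rewrite ltnNge; apply/negP => h; rewrite nth_default ?eqxx in nz.
by case: (size r).
Qed.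

Lemma tdeg2_ge (q : {poly {poly K}}) j i : (q`_j)`_i != 0 -> (j + i <= tdeg2 q)%N.
Proof.
move=> nz; have nzj : q`_j != 0 by apply/negP => /eqP h; rewrite h coef0 eqxx in nz.
have hj : (j < size q)%N.
  by rewrite ltnNge; apply/negP => h; rewrite nth_default ?eqxx in nzj.
rewrite /tdeg2; apply: leq_trans (leq_bigmax_cond (Ordinal hj) nzj) => /=.
by rewrite leq_add2l tdeg1_ge.
Qed.

Lemma tdeg_ge (P : P3) k j i : ((P`_k)`_j)`_i != 0 -> (k + j + i <= tdeg P)%N.
Proof.
move=> nz; have nzk : P`_k != 0 by apply/negP => /eqP h; rewrite h !coef0 eqxx in nz.
have hk : (k < size P)%N.
  by rewrite ltnNge; apply/negP => h; rewrite nth_default ?eqxx in nzk.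
rewrite /tdeg; apply: leq_trans (leq_bigmax_cond (Ordinal hk) nzk) => /=.
by rewrite -addnA leq_add2l tdeg2_ge.
Qed.
Definition cstf : {rmorphism K -> P3} := ((polyC \o polyC) \o polyC)%FUN.
Section S.
Variable F : map3.
Lemma c1 : commr_rmorph cstf (F i0). Proof. move=> x; exact: mulrC. Qed.
Definition h1 := horner_morph c1.
Lemma c2 : commr_rmorph h1 (F i1). Proof. move=> x; exact: mulrC. Qed.
Definition h2 := horner_morph c2.
Lemma c3 : commr_rmorph h2 (F i2). Proof. move=> x; exact: mulrC. Qed.
Definition h3 := horner_morph c3.
Lemma subst3E P : subst3 P F = h3 P. Proof. reflexivity. Qed.

Lemma substD P Q : subst3 (P + Q) F = subst3 P F + subst3 Q F.
Proof. by rewrite !subst3E /h3 rmorphD. Qed.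
Lemma substB P Q : subst3 (P - Q) F = subst3 P F - subst3 Q F.
Proof. by rewrite !subst3E /h3 rmorphB. Qed.
Lemma substM P Q : subst3 (P * Q) F = subst3 P F * subst3 Q F.
Proof. by rewrite !subst3E /h3 rmorphM. Qed.
Lemma substXn P n : subst3 (P ^+ n) F = subst3 P F ^+ n.
Proof. by rewrite !subst3E /h3 rmorphXn. Qed.
Lemma substN P : subst3 (- P) F = - subst3 P F.
Proof. by rewrite !subst3E /h3 rmorphN. Qed.
Lemma subst0 : subst3 0 F = 0.
Proof. by rewrite !subst3E /h3 rmorph0. Qed.
Lemma substC c : subst3 (cst c) F = cst c.
Proof. rewrite subst3E /h3 /cst (horner_morphC c3). exact: etrans (horner_morphC c2 _) (horner_morphC c1 _). Qed.
Lemma substV i : subst3 (Xv i) F = F i.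
Proof.
have : (i == i0) || (i == i1) || (i == i2).
  by case: i => [[|[|[|n]]] Hi] //.
rewrite /Xv; case: eqP => [->|_] /=.
  move=> _; rewrite subst3E /h3 (horner_morphC c3). exact: etrans (horner_morphC c2 _) (horner_morphX c1).
case: eqP => [->|_] /=.
  move=> _; rewrite subst3E /h3 (horner_morphC c3). exact: (horner_morphX c2).
by move/eqP=> ->; rewrite subst3E /h3 (horner_morphX c3).
Qed.
End S.

Local Notation X1 := (Xv i0).
Local Notation X2 := (Xv i1).
Local Notation X3 := (Xv i2).

Definition mk3 (f g h : P3) : map3 := fun i => if i == i0 then f else if i == i1 then g else h.
Lemma mk3_0 f g h : mk3 f g h i0 = f. Proof. by []. Qed.
Lemma mk3_1 f g h : mk3 f g h i1 = g. Proof. by []. Qed.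
Lemma mk3_2 f g h : mk3 f g h i2 = h. Proof. by []. Qed.

Lemma ord3P (P : 'I_3 -> Prop) : P i0 -> P i1 -> P i2 -> forall i, P i.
Proof.
move=> H0 H1 H2 [[|[|[|n]]] Hi] //.
- by suff -> : Ordinal Hi = i0 by []; apply: val_inj.
- by suff -> : Ordinal Hi = i1 by []; apply: val_inj.
- by suff -> : Ordinal Hi = i2 by []; apply: val_inj.
Qed.

Lemma map3_ext (F G : map3) : F i0 = G i0 -> F i1 = G i1 -> F i2 = G i2 -> F = G.
Proof. move=> *; apply: functional_extensionality; exact: ord3P. Qed.

Lemma XvE0 : X1 = ('X%:P)%:P. Proof. by []. Qed.
Lemma XvE1 : X2 = 'X%:P. Proof. by []. Qed.
Lemma XvE2 : X3 = 'X. Proof. by []. Qed.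

Lemma elem0 g : free_of i0 g -> elementary (mk3 (X1 + g) X2 X3).
Proof.
move=> fg; exists i0, g; split => //; split => //.
by apply: ord3P.
Qed.
Lemma elem1 g : free_of i1 g -> elementary (mk3 X1 (X2 + g) X3).
Proof.
move=> fg; exists i1, g; split => //; split => //.
by apply: ord3P.
Qed.
Lemma elem2 g : free_of i2 g -> elementary (mk3 X1 X2 (X3 + g)).
Proof.
move=> fg; exists i2, g; split => //; split => //.
by apply: ord3P.
Qed.

Definition ssimp := (substN, substD, substB, substM, substXn, substV, mk3_0, mk3_1, mk3_2).

Lemma top_coef (R : idomainType) (x y : R) a b k l : (0 < a)%N -> (0 < b)%N ->
  ((('X^a + x%:P) ^+ k * ('X^b + y%:P) ^+ l) : {poly R})`_(a * k + b * l) = 1.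
Proof.
move=> a0 b0.
have mp : ('X^a + x%:P) ^+ k \is monic by apply: monic_exp; apply: monicXnaddC.
have mq : ('X^b + y%:P) ^+ l \is monic by apply: monic_exp; apply: monicXnaddC.
have sp := size_exp ('X^a + x%:P) k; rewrite size_XnaddC // /= in sp.
have sq := size_exp ('X^b + y%:P) l; rewrite size_XnaddC // /= in sq.
have mpq : ('X^a + x%:P) ^+ k * ('X^b + y%:P) ^+ l \is monic by rewrite monicMl.
have <- : (size (('X^a + x%:P) ^+ k * ('X^b + y%:P) ^+ l)).-1 = (a * k + b * l)%N.
  rewrite size_mul ?monic_neq0 // -sp -sq.
  rewrite (polySpred (monic_neq0 mp)) (polySpred (monic_neq0 mq)) /=.
  by rewrite ?addSn ?addnS.
by apply/eqP; rewrite -lead_coefE.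
Qed.

Lemma top_coef1 (R : idomainType) (x : R) a k : (0 < a)%N ->
  ((('X^a + x%:P) ^+ k) : {poly R})`_(a * k) = 1.
Proof.
move=> a0; have := @top_coef R x 0 a 1 k 0 a0 isT.
by rewrite expr0 mulr1 muln0 addn0.
Qed.

Lemma tdeg_eq d (P : P3) k j i : ok3 d P -> ((P`_k)`_j)`_i != 0 ->
  (k + j + i)%N = d -> tdeg P = d.
Proof.
move=> H nz e; apply/eqP; rewrite eqn_leq tdeg_le //=.
by rewrite -e; apply: tdeg_ge.
Qed.

Lemma ok3_pow i n : ok3 n (Xv i ^+ n).
Proof. by have := ok3_exp n (ok3_X i); rewrite mul1n. Qed.
Lemma case2 a m c : (0 < a)%N -> (0 < m)%N -> (0 < c)%N ->
  exists F : map3, is_poly_aut F /\ tame F /\ mdeg F = (a, (a * m)%N, c).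
Proof.
move=> a0 m0 c0.
set F := mk3 (X1 + X3 ^+ a) (X2 + (X1 + X3 ^+ a) ^+ m) (X3 + X2 ^+ c).
exists F; split; [|split].
- set H1 := X2 - X1 ^+ m.
  set H2 := X3 - H1 ^+ c.
  exists (mk3 (X1 - H2 ^+ a) H1 H2); split; apply: map3_ext;
    rewrite /comp3 /F /H2 /H1 /= ?ssimp.
  + by rewrite subrK.
  + by rewrite subrK subrK.
  + by rewrite subrK.
  + by rewrite addrK addrK addrK.
  + by rewrite addrK.
  + by rewrite addrK addrK.
- have -> : F = comp3 (mk3 X1 (X2 + X1 ^+ m) X3)
             (comp3 (mk3 X1 X2 (X3 + X2 ^+ c)) (mk3 (X1 + X3 ^+ a) X2 X3)).
    apply: map3_ext; rewrite /comp3 /F /= !ssimp //.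
  apply: tame_comp; [apply: tame_elem|apply: tame_comp; apply: tame_elem].
  + by apply: elem1; rewrite /free_of !ssimp.
  + by apply: elem2; rewrite /free_of !ssimp.
  + by apply: elem0; rewrite /free_of !ssimp.
- rewrite /mdeg /F !mk3_0 !mk3_1 !mk3_2.
  have ok0 : ok3 a (X1 + X3 ^+ a).
    by apply: ok3_add; [apply: ok3_mono a0 (ok3_X i0)|apply: ok3_pow].
  congr (_, _, _).
  + apply: (@tdeg_eq a _ a 0 0) => //; last by rewrite !addn0.
    rewrite XvE0 XvE2 coefD coefC coefXn eqxx.
    rewrite (negbTE (lt0n_neq0 a0)) add0r coef1 eqxx /= coef1 eqxx /=.
    exact: oner_neq0.
  + apply: (@tdeg_eq (a * m) _ (a * m) 0 0); last by rewrite !addn0.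
      apply: ok3_add; first by apply: ok3_mono (ok3_X i1); rewrite muln_gt0 a0.
      exact: ok3_exp.
    rewrite coefD XvE1 coefC (negbTE (lt0n_neq0 _)) ?muln_gt0 ?a0 // add0r.
    rewrite XvE0 XvE2 addrC top_coef1 // coef1 eqxx /= coef1 eqxx /=.
    exact: oner_neq0.
  + apply: (@tdeg_eq c _ 0 c 0); last by rewrite add0n addn0.
      by apply: ok3_add; [apply: ok3_mono c0 (ok3_X i2)|apply: ok3_pow].
    rewrite coefD XvE2 XvE1 coefX /= add0r -rmorphXn coefC /= coefXn eqxx /= coef1 eqxx /=.
    exact: oner_neq0.
Qed.

Lemma case1 a b c k l : (0 < a)%N -> (0 < b)%N -> (2 <= c)%N -> c = (k * a + l * b)%N ->
  exists F : map3, is_poly_aut F /\ tame F /\ mdeg F = (a, b, c).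
Proof.
move=> a0 b0 c2 ce.
set F := mk3 (X1 + X3 ^+ a) (X2 + X3 ^+ b)
             (X3 + (X1 + X3 ^+ a) ^+ k * (X2 + X3 ^+ b) ^+ l).
exists F; split; [|split].
- set H3 := X3 - X1 ^+ k * X2 ^+ l.
  exists (mk3 (X1 - H3 ^+ a) (X2 - H3 ^+ b) H3); split; apply: map3_ext;
    rewrite /comp3 /F /H3 /= ?ssimp.
  + by rewrite subrK.
  + by rewrite subrK.
  + by rewrite !subrK.
  + by rewrite !addrK.
  + by rewrite !addrK.
  + by rewrite !addrK.
- have -> : F = comp3 (mk3 X1 X2 (X3 + X1 ^+ k * X2 ^+ l))
             (comp3 (mk3 (X1 + X3 ^+ a) X2 X3) (mk3 X1 (X2 + X3 ^+ b) X3)).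
    apply: map3_ext; rewrite /comp3 /F /= !ssimp //.
  apply: tame_comp; [apply: tame_elem|apply: tame_comp; apply: tame_elem].
  + by apply: elem2; rewrite /free_of !ssimp.
  + by apply: elem0; rewrite /free_of !ssimp.
  + by apply: elem1; rewrite /free_of !ssimp.
- rewrite /mdeg /F !mk3_0 !mk3_1 !mk3_2.
  have ok0 : ok3 a (X1 + X3 ^+ a).
    by apply: ok3_add; [apply: ok3_mono a0 (ok3_X i0)|apply: ok3_pow].
  have ok1 : ok3 b (X2 + X3 ^+ b).
    by apply: ok3_add; [apply: ok3_mono b0 (ok3_X i1)|apply: ok3_pow].
  congr (_, _, _).
  + apply: (@tdeg_eq a _ a 0 0) => //; last by rewrite !addn0.
    rewrite XvE0 XvE2 coefD coefC coefXn eqxx.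
    rewrite (negbTE (lt0n_neq0 a0)) add0r coef1 eqxx /= coef1 eqxx /=.
    exact: oner_neq0.
  + apply: (@tdeg_eq b _ b 0 0) => //; last by rewrite !addn0.
    rewrite XvE1 XvE2 coefD coefC coefXn eqxx.
    rewrite (negbTE (lt0n_neq0 b0)) add0r coef1 eqxx /= coef1 eqxx /=.
    exact: oner_neq0.
  + apply: (@tdeg_eq c _ c 0 0); last by rewrite !addn0.
      apply: ok3_add; first by apply: ok3_mono (ok3_X i2); apply: ltnW.
      rewrite ce [(k * a)%N]mulnC [(l * b)%N]mulnC.
      by apply: ok3_mul; apply: ok3_exp.
    rewrite coefD XvE2 coefX.
    have -> : (c == 1%N) = false by apply/negbTE; rewrite neq_ltn c2 orbT.
    rewrite add0r XvE0 XvE1 (addrC _ ('X^a)) (addrC _ ('X^b)).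
    rewrite ce [(k * a)%N]mulnC [(l * b)%N]mulnC top_coef // coef1 eqxx /= coef1 eqxx /=.
    exact: oner_neq0.
Qed.

Theorem fact1 (a b c : nat) :
  (0 < a)%N -> (a <= b)%N -> (b <= c)%N ->
  ((exists k l : nat, c = (k * a + l * b)%N) \/ (a %| b)%N \/ (a <= 2)%N) ->
  exists F : map3, is_poly_aut F /\ tame F /\ mdeg F = (a, b, c).
Proof.
move=> a0 ab bc.
have b0 : (0 < b)%N by apply: leq_trans ab.
have c0 : (0 < c)%N by apply: leq_trans bc.
have div2 : (a %| b)%N -> exists F : map3, is_poly_aut F /\ tame F /\ mdeg F = (a, b, c).
  case/dvdnP => m bm.
  have m0 : (0 < m)%N by move: b0; rewrite bm muln_gt0 => /andP [].
  by have := case2 a0 m0 c0; rewrite mulnC -bm.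
have cas1 : forall k l, c = (k * a + l * b)%N ->
    exists F : map3, is_poly_aut F /\ tame F /\ mdeg F = (a, b, c).
  move=> k l ce; case: (leqP 2 c) => hc; first exact: case1 hc ce.
  apply: div2.
  have c1 : c = 1%N by apply/eqP; rewrite eqn_leq -ltnS hc c0.
  have b1 : b = 1%N by apply/eqP; rewrite eqn_leq b0 andbT -c1 bc.
  by rewrite b1 dvdn1 eqn_leq a0 andbT -b1 ab.
case=> [[k [l ce]]|[ab'|a2]]; first exact: cas1 ce.
  exact: div2.
have [a1|a2'] : a = 1%N \/ a = 2%N.
  by move: a0 a2; case: (a) => [|[|[|n]]] //; auto.
  by apply: div2; rewrite a1 dvd1n.
case ob: (odd b).
  case oc: (odd c).
    apply: (@cas1 ((c - b)./2) 1).
    have oe : odd (c - b) = false by rewrite oddB // oc ob.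
    rewrite a2' mul1n muln2 -[X in X = _](subnK bc).
    by rewrite -{1}(odd_double_half (c - b)) oe add0n.
  apply: (@cas1 c./2 0).
  by rewrite a2' muln2 mul0n addn0 -{1}(odd_double_half c) oc add0n.
apply: div2; rewrite a2'; apply/dvdnP; exists b./2.
by rewrite muln2 -{1}(odd_double_half b) ob add0n.
Qed.
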